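(* Let $m,n,p,r$ be positive integers, let $\mathcal{A}:\mathbb{C}^{m\times n}\to\mathbb{C}^p$ be a linear operator with $\delta_{4r}(\mathcal{A})\le 0.04$, let $X_0\in\mathbb{C}^{m\times n}$ with $\mathrm{rank}(X_0)\le r$, let $\nu\in\mathbb{C}^p$, and let $b=\mathcal{A}X_0+\nu$. Let $(\widehat{X}_k)_{k\ge0}$ be any sequence of estimates produced by ADMiRA with input $(\mathcal{A},b,r)$. Then for each $k\ge0$, $$\|X_0-\widehat{X}_{k+1}\|_F\le 0.5\|X_0-\widehat{X}_k\|_F+6.5\|\nu\|_2,$$ and consequently $\|X_0-\widehat{X}_k\|_F\le 2^{-k}\|X_0\|_F+13\|\nu\|_2$ for all $k\ge0$.
   Context: $\mathbb{C}^p$ has inner product $\langle x,y\rangle=y^Hx$ and norm $\|\cdot\|_2$; $\mathbb{C}^{m\times n}$ has inner product $\langle X,Y\rangle=\mathrm{tr}(Y^HX)$ and Frobenius norm $\|\cdot\|_F$; $\mathcal{A}^*$ is the adjoint of $\mathcal{A}$. For $s\ge1$, $\delta_s(\mathcal{A})$ is the smallest $\delta\ge0$ such that $(1-\delta)\|X\|_F^2\le\|\mathcal{A}X\|_2^2\le(1+\delta)\|X\|_F^2$ for all $X$ with $\mathrm{rank}(X)\le s$. The set of atoms $\mathbb{O}$ is a set of unit-Frobenius-norm rank-one matrices such that every nonzero rank-one matrix is a scalar multiple of exactly one element of $\mathbb{O}$. For $\Psi\subset\mathbb{O}$, $\mathcal{P}_\Psi$ is the orthogonal projection onto $\mathrm{span}(\Psi)$.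 ADMiRA with input $(\mathcal{A},b,r)$: set $\widehat{X}_0=0$, $\widehat{\Psi}_0=\emptyset$; for $k=0,1,2,\dots$: (1) choose $\Psi'_{k+1}$ maximizing $\|\mathcal{P}_\Psi\mathcal{A}^*(b-\mathcal{A}\widehat{X}_k)\|_F$ over $\Psi\subset\mathbb{O}$, $|\Psi|\le 2r$; (2) $\widetilde{\Psi}_{k+1}=\Psi'_{k+1}\cup\widehat{\Psi}_k$; (3) $\widetilde{X}_{k+1}$ minimizes $\|b-\mathcal{A}X\|_2$ over $X\in\mathrm{span}(\widetilde{\Psi}_{k+1})$; (4) choose $\widehat{\Psi}_{k+1}$ maximizing $\|\mathcal{P}_\Psi\widetilde{X}_{k+1}\|_F$ over $\Psi\subset\mathbb{O}$, $|\Psi|\le r$; (5) $\widehat{X}_{k+1}=\mathcal{P}_{\widehat{\Psi}_{k+1}}\widetilde{X}_{k+1}$. *)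

(* Defs.v *)
From HB Require Import structures.
From mathcomp Require Import all_boot all_order all_algebra.
From mathcomp Require Import complex.
From mathcomp Require Import Rstruct.
From Stdlib Require Rdefinitions.
Set Implicit Arguments. Unset Strict Implicit. Unset Printing Implicit Defensive.
Import Order.TTheory GRing.Theory Num.Theory.
Local Open Scope ring_scope.

Definition C : numClosedFieldType := (Rdefinitions.R)[i].

Definition ctrans (m n : nat) (X : 'M[C]_(m, n)) : 'M[C]_(n, m) :=
  (map_mx (@Num.conj C) X)^T.

Definition vinner (p : nat) (x y : 'cV[C]_p) : C := (ctrans y *m x) 0 0.
Definition vnorm (p : nat) (x : 'cV[C]_p) : C := sqrtC (vinner x x).

Definition minner (m n : nat) (X Y : 'M[C]_(m, n)) : C := \tr (ctrans Y *m X).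
Definition fnorm (m n : nat) (X : 'M[C]_(m, n)) : C := sqrtC (minner X X).

(* Adjoint of a linear operator A : C^{m x n} -> C^p, given entrywise:
   (A^* v)_{ij} = <v, A E_{ij}>, so that <A X, v> = <X, A^* v>. *)
Definition adjoint (m n p : nat) (A : {linear 'M[C]_(m, n) -> 'cV[C]_p})
  (v : 'cV[C]_p) : 'M[C]_(m, n) :=
  \matrix_(i, j) vinner v (A (delta_mx i j)).

Definition rip_ineq (m n p : nat) (A : {linear 'M[C]_(m, n) -> 'cV[C]_p})
  (s : nat) (d : C) : Prop :=
  forall X : 'M[C]_(m, n), (\rank X <= s)%N ->
    (1 - d) * fnorm X ^+ 2 <= vnorm (A X) ^+ 2 <= (1 + d) * fnorm X ^+ 2.

Definition is_rip_const (m n p : nat) (A : {linear 'M[C]_(m, n) -> 'cV[C]_p})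
  (s : nat) (d : C) : Prop :=
  0 <= d /\ rip_ineq A s d /\
  (forall d' : C, 0 <= d' -> rip_ineq A s d' -> d <= d').

Definition atom_set (m n : nat) (O : 'M[C]_(m, n) -> Prop) : Prop :=
  (forall Z, O Z -> fnorm Z = 1 /\ \rank Z = 1%N) /\
  (forall Y : 'M[C]_(m, n), \rank Y = 1%N ->
     exists Z, (O Z /\ exists c : C, Y = c *: Z) /\
       forall Z', O Z' -> (exists c : C, Y = c *: Z') -> Z' = Z).

Definition admissible (m n : nat) (O : 'M[C]_(m, n) -> Prop) (s : nat)
  (Psi : seq 'M[C]_(m, n)) : Prop :=
  uniq Psi /\ (forall Z, Z \in Psi -> O Z) /\ (size Psi <= s)%N.

Definition in_span (m n : nat) (Psi : seq 'M[C]_(m, n)) (Y : 'M[C]_(m, n))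
  : Prop :=
  exists c : 'I_(size Psi) -> C, Y = \sum_(i < size Psi) c i *: Psi`_i.

Definition is_proj (m n : nat) (Psi : seq 'M[C]_(m, n)) (X Y : 'M[C]_(m, n))
  : Prop :=
  in_span Psi Y /\ forall Z, in_span Psi Z -> minner (X - Y) Z = 0.

Definition maximizes_proj (m n : nat) (O : 'M[C]_(m, n) -> Prop) (s : nat)
  (V : 'M[C]_(m, n)) (Psi : seq 'M[C]_(m, n)) : Prop :=
  admissible O s Psi /\
  forall Psi2, admissible O s Psi2 ->
    forall Y Y2, is_proj Psi V Y -> is_proj Psi2 V Y2 -> fnorm Y2 <= fnorm Y.

(* Xhat is a sequence of estimates produced by ADMiRA with input (A, b, r)
   and atom set O. Psi'_{k+1} = Psi1 k, Psihat_k = Psihat k,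
   Psitilde_{k+1} = Psi1 k ++ Psihat k, Xtilde_{k+1} = Xtil k. *)
Definition admira_run (m n p : nat) (O : 'M[C]_(m, n) -> Prop)
  (A : {linear 'M[C]_(m, n) -> 'cV[C]_p}) (b : 'cV[C]_p) (r : nat)
  (Xhat : nat -> 'M[C]_(m, n)) : Prop :=
  exists (Psihat Psi1 : nat -> seq 'M[C]_(m, n)) (Xtil : nat -> 'M[C]_(m, n)),
    Xhat 0%N = 0 /\ Psihat 0%N = [::] /\
    forall k : nat,
      maximizes_proj O (2 * r) (adjoint A (b - A (Xhat k))) (Psi1 k) /\
      (in_span (Psi1 k ++ Psihat k) (Xtil k) /\
       forall X, in_span (Psi1 k ++ Psihat k) X ->
         vnorm (b - A (Xtil k)) <= vnorm (b - A X)) /\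
      maximizes_proj O r (Xtil k) (Psihat k.+1) /\
      is_proj (Psihat k.+1) (Xtil k) (Xhat k.+1).

(* Main.v *)
Require Import Defs.
From HB Require Import structures.
From mathcomp Require Import all_boot all_order all_algebra.
From mathcomp Require Import complex Rstruct.
From mathcomp Require Import ring lra.
Set Implicit Arguments. Unset Strict Implicit. Unset Printing Implicit Defensive.
Import Order.TTheory GRing.Theory Num.Theory.
Local Open Scope ring_scope.
Notation K := Rdefinitions.R.

Lemma minnerE a b (X Y : 'M[C]_(a,b)) :
  minner X Y = \sum_i \sum_j X i j * (Y i j)^*.
Proof.
rewrite /minner /mxtrace.
under eq_bigr => j _ do (rewrite !mxE; under eq_bigr => k _ do rewrite !mxE mulrC).
by rewrite exchange_big.
Qed.

Lemma minnerDl a b (X Y Z : 'M[C]_(a,b)) :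
  minner (X + Y) Z = minner X Z + minner Y Z.
Proof.
rewrite !minnerE -big_split /=; apply: eq_bigr => i _.
rewrite -big_split /=; apply: eq_bigr => j _; rewrite mxE mulrDl //.
Qed.

Lemma minnerZl a b c (X Z : 'M[C]_(a,b)) :
  minner (c *: X) Z = c * minner X Z.
Proof.
rewrite !minnerE mulr_sumr; apply: eq_bigr => i _.
rewrite mulr_sumr; apply: eq_bigr => j _; rewrite mxE mulrA //.
Qed.

Lemma minnerC a b (X Y : 'M[C]_(a,b)) : minner Y X = (minner X Y)^*.
Proof.
rewrite !minnerE rmorph_sum; apply: eq_bigr => i _.
rewrite rmorph_sum; apply: eq_bigr => j _; rewrite rmorphM /= conjCK mulrC //.
Qed.

Lemma minner_ge0 a b (X : 'M[C]_(a,b)) : 0 <= minner X X.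
Proof.
rewrite minnerE; apply: sumr_ge0 => i _; apply: sumr_ge0 => j _.
exact: mul_conjC_ge0.
Qed.

Lemma minner_eq0 a b (X : 'M[C]_(a,b)) : minner X X = 0 -> X = 0.
Proof.
rewrite minnerE => /eqP; rewrite psumr_eq0; last first.
  by move=> i _; apply: sumr_ge0 => j _; exact: mul_conjC_ge0.
move=> /allP H; apply/matrixP => i j; rewrite mxE.
have := H i (mem_index_enum _); rewrite psumr_eq0; last first.
  by move=> k _; exact: mul_conjC_ge0.
move=> /allP /(_ j (mem_index_enum _)) /eqP.
by move/eqP; rewrite mul_conjC_eq0 => /eqP.
Qed.
Lemma minner0l a b (Z : 'M[C]_(a,b)) : minner 0 Z = 0.
Proof. by rewrite minnerE big1 // => i _; rewrite big1 // => j _; rewrite mxE mul0r. Qed.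

Lemma minner0r a b (Z : 'M[C]_(a,b)) : minner Z 0 = 0.
Proof. by rewrite minnerC minner0l rmorph0. Qed.

Lemma minnerNl a b (X Z : 'M[C]_(a,b)) : minner (- X) Z = - minner X Z.
Proof. by rewrite -scaleN1r minnerZl mulN1r. Qed.

Lemma minnerBl a b (X Y Z : 'M[C]_(a,b)) :
  minner (X - Y) Z = minner X Z - minner Y Z.
Proof. by rewrite minnerDl minnerNl. Qed.

Lemma minnerDr a b (X Y Z : 'M[C]_(a,b)) :
  minner X (Y + Z) = minner X Y + minner X Z.
Proof. by rewrite minnerC minnerDl rmorphD /= -!minnerC. Qed.

Lemma minnerZr a b c (X Y : 'M[C]_(a,b)) :
  minner X (c *: Y) = c^* * minner X Y.
Proof. by rewrite minnerC minnerZl rmorphM /= -minnerC. Qed.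

Lemma minnerNr a b (X Z : 'M[C]_(a,b)) : minner X (- Z) = - minner X Z.
Proof. by rewrite -scaleN1r minnerZr rmorphN rmorph1 mulN1r. Qed.

Lemma minnerBr a b (X Y Z : 'M[C]_(a,b)) :
  minner X (Y - Z) = minner X Y - minner X Z.
Proof. by rewrite minnerDr minnerNr. Qed.

Definition ipR a b (X Y : 'M[C]_(a,b)) : K := complex.Re (minner X Y).
Definition nsq a b (X : 'M[C]_(a,b)) : K := ipR X X.
Definition nR a b (X : 'M[C]_(a,b)) : K := Num.sqrt (nsq X).

Lemma ReD (x y : C) : complex.Re (x + y) = complex.Re x + complex.Re y.
Proof. exact: raddfD (@complex.Re _ : Rcomplex _ -> _) x y. Qed.
Lemma ReN (x : C) : complex.Re (- x) = - complex.Re x.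
Proof. exact: raddfN (@complex.Re _ : Rcomplex _ -> _) x. Qed.
Lemma ReJ (x : C) : complex.Re (x^*) = complex.Re x.
Proof. by case: x. Qed.
Lemma ReZ (t : K) (x : C) : complex.Re ((t%:C)%C * x) = t * complex.Re x.
Proof. case: x => x y /=; ring. Qed.

Lemma ipRC a b (X Y : 'M[C]_(a,b)) : ipR X Y = ipR Y X.
Proof. by rewrite /ipR minnerC ReJ. Qed.

Lemma ipRDl a b (X Y Z : 'M[C]_(a,b)) : ipR (X + Y) Z = ipR X Z + ipR Y Z.
Proof. by rewrite /ipR minnerDl ReD. Qed.

Lemma ipRNl a b (X Z : 'M[C]_(a,b)) : ipR (- X) Z = - ipR X Z.
Proof. by rewrite /ipR minnerNl ReN. Qed.

Lemma ipRBl a b (X Y Z : 'M[C]_(a,b)) : ipR (X - Y) Z = ipR X Z - ipR Y Z.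
Proof. by rewrite ipRDl ipRNl. Qed.

Lemma ipRZl a b (t : K) (X Z : 'M[C]_(a,b)) :
  ipR ((t%:C)%C *: X) Z = t * ipR X Z.
Proof. by rewrite /ipR minnerZl ReZ. Qed.

Lemma ipRDr a b (X Y Z : 'M[C]_(a,b)) : ipR Z (X + Y) = ipR Z X + ipR Z Y.
Proof. by rewrite !(ipRC Z) ipRDl. Qed.
Lemma ipRNr a b (X Z : 'M[C]_(a,b)) : ipR Z (- X) = - ipR Z X.
Proof. by rewrite !(ipRC Z) ipRNl. Qed.
Lemma ipRBr a b (X Y Z : 'M[C]_(a,b)) : ipR Z (X - Y) = ipR Z X - ipR Z Y.
Proof. by rewrite !(ipRC Z) ipRBl. Qed.
Lemma ipRZr a b (t : K) (X Z : 'M[C]_(a,b)) :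
  ipR Z ((t%:C)%C *: X) = t * ipR Z X.
Proof. by rewrite !(ipRC Z) ipRZl. Qed.
Lemma ipR0r a b (Z : 'M[C]_(a,b)) : ipR Z 0 = 0.
Proof. by rewrite /ipR minner0r. Qed.
Lemma ipR0l a b (Z : 'M[C]_(a,b)) : ipR 0 Z = 0.
Proof. by rewrite /ipR minner0l. Qed.

Lemma minner_self a b (X : 'M[C]_(a,b)) : minner X X = ((nsq X)%:C)%C.
Proof.
have := minner_ge0 X; rewrite /nsq /ipR.
by case: (minner X X) => x y /ger0_Im /= ->.
Qed.

Lemma nsq_ge0 a b (X : 'M[C]_(a,b)) : 0 <= nsq X.
Proof. by have := minner_ge0 X; rewrite minner_self ler0c. Qed.

Lemma nsq_eq0 a b (X : 'M[C]_(a,b)) : nsq X = 0 -> X = 0.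
Proof. by move=> H; apply: minner_eq0; rewrite minner_self H. Qed.

Lemma nR_ge0 a b (X : 'M[C]_(a,b)) : 0 <= nR X.
Proof. exact: sqrtr_ge0. Qed.

Lemma nR_sq a b (X : 'M[C]_(a,b)) : nR X * nR X = nsq X.
Proof. by rewrite -expr2 sqr_sqrtr // nsq_ge0. Qed.

Lemma fnormE a b (X : 'M[C]_(a,b)) : fnorm X = ((nR X)%:C)%C.
Proof.
rewrite /fnorm minner_self -nR_sq -expr2 rmorphXn /= sqrCK //.
by rewrite ler0c nR_ge0.
Qed.

Lemma vnormE p (x : 'cV[C]_p) : vnorm x = fnorm x.
Proof. by rewrite /vnorm /fnorm /vinner /minner trace_mx11. Qed.

Lemma vinnerE p (x y : 'cV[C]_p) : vinner x y = minner x y.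
Proof. by rewrite /vinner /minner trace_mx11. Qed.

Lemma nsqLC a b (u w : K) (X Y : 'M[C]_(a,b)) :
  nsq ((u%:C)%C *: X + (w%:C)%C *: Y) =
  u * u * nsq X + 2 * u * w * ipR X Y + w * w * nsq Y.
Proof.
rewrite /nsq !ipRDl !ipRDr !ipRZl !ipRZr (ipRC Y X); ring.
Qed.

Lemma nsqD a b (X Y : 'M[C]_(a,b)) :
  nsq (X + Y) = nsq X + 2 * ipR X Y + nsq Y.
Proof. rewrite /nsq !ipRDl !ipRDr (ipRC Y X); ring. Qed.

Lemma nsqB a b (X Y : 'M[C]_(a,b)) :
  nsq (X - Y) = nsq X - 2 * ipR X Y + nsq Y.
Proof. rewrite /nsq !ipRBl !ipRBr (ipRC Y X); ring. Qed.

Lemma nsqN a b (X : 'M[C]_(a,b)) : nsq (- X) = nsq X.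
Proof. rewrite /nsq ipRNl ipRNr; ring. Qed.

Lemma nRN a b (X : 'M[C]_(a,b)) : nR (- X) = nR X.
Proof. by rewrite /nR nsqN. Qed.

Lemma nR_sym a b (X Y : 'M[C]_(a,b)) : nR (X - Y) = nR (Y - X).
Proof. by rewrite -nRN opprB. Qed.

Lemma nR_le_sq (x y : K) : 0 <= y -> x * x <= y * y -> 0 <= x -> x <= y.
Proof. move=> *; nra. Qed.

Lemma CS a b (X Y : 'M[C]_(a,b)) : ipR X Y <= nR X * nR Y.
Proof.
have hX := nR_sq X; have hY := nR_sq Y.
have gX := nR_ge0 X; have gY := nR_ge0 Y.
have [q0|qn0] := eqVneq (nsq Y) 0.
  by rewrite (nsq_eq0 q0) ipR0r; apply: mulr_ge0; apply: nR_ge0.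
have qp : 0 < nsq Y by rewrite lt_def qn0 nsq_ge0.
have := nsq_ge0 (((nsq Y)%:C)%C *: X + ((- ipR X Y)%:C)%C *: Y).
rewrite nsqLC => H.
have H2 : ipR X Y * ipR X Y <= nsq X * nsq Y by nra.
have H3 : ipR X Y * ipR X Y <= (nR X * nR Y) * (nR X * nR Y) by rewrite mulrACA hX hY.
have [c0|c0] := lerP (ipR X Y) 0; first exact: le_trans c0 (mulr_ge0 gX gY).
by apply: nR_le_sq => //; [exact: mulr_ge0| exact: ltW].
Qed.


Lemma nR_tri a b (X Y : 'M[C]_(a,b)) : nR (X + Y) <= nR X + nR Y.
Proof.
apply: nR_le_sq; rewrite ?addr_ge0 ?nR_ge0 //.
rewrite nR_sq nsqD; have := CS X Y; have := nR_sq X; have := nR_sq Y. nra.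
Qed.

Lemma nR_triB a b (X Y Z : 'M[C]_(a,b)) : nR (X - Z) <= nR (X - Y) + nR (Y - Z).
Proof. by have := nR_tri (X - Y) (Y - Z); rewrite addrA subrK. Qed.

Lemma nsq_le a b c d (X : 'M[C]_(a,b)) (Y : 'M[C]_(c,d)) :
  nsq X <= nsq Y -> nR X <= nR Y.
Proof. move=> H; apply: nR_le_sq; rewrite ?nR_ge0 // !nR_sq //. Qed.

Lemma span0 a b (L : seq 'M[C]_(a,b)) : in_span L 0.
Proof. by exists (fun _ => 0); rewrite big1 // => i _; rewrite scale0r. Qed.

Lemma spanD a b (L : seq 'M[C]_(a,b)) X Y :
  in_span L X -> in_span L Y -> in_span L (X + Y).
Proof.
move=> [c1 ->] [c2 ->]; exists (fun i => c1 i + c2 i).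
by rewrite -big_split /=; apply: eq_bigr => i _; rewrite scalerDl.
Qed.

Lemma spanZ a b (L : seq 'M[C]_(a,b)) c X : in_span L X -> in_span L (c *: X).
Proof.
move=> [c1 ->]; exists (fun i => c * c1 i).
by rewrite scaler_sumr; apply: eq_bigr => i _; rewrite scalerA.
Qed.

Lemma spanN a b (L : seq 'M[C]_(a,b)) X : in_span L X -> in_span L (- X).
Proof. by move=> H; rewrite -scaleN1r; apply: spanZ. Qed.

Lemma spanB a b (L : seq 'M[C]_(a,b)) X Y :
  in_span L X -> in_span L Y -> in_span L (X - Y).
Proof. by move=> H1 H2; apply: spanD => //; apply: spanN. Qed.

Lemma span_mem a b (L : seq 'M[C]_(a,b)) Z : Z \in L -> in_span L Z.
Proof.
move=> HZ; have Hi : (index Z L < size L)%N by rewrite index_mem.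
exists (fun i => if val i == index Z L then 1 else 0).
rewrite (bigD1 (Ordinal Hi)) //= eqxx scale1r nth_index // big1 ?addr0 //.
move=> i ne; case: eqP => h; last by rewrite scale0r.
by case/eqP: ne; apply: val_inj.
Qed.

Lemma span_sub a b (L1 L2 : seq 'M[C]_(a,b)) X :
  (forall Z, Z \in L1 -> in_span L2 Z) -> in_span L1 X -> in_span L2 X.
Proof.
move=> H [c ->]; apply: (big_ind (fun Y => in_span L2 Y)).
- exact: span0.
- by move=> ? ?; apply: spanD.
- by move=> i _; apply: spanZ; apply: H; apply: mem_nth.
Qed.

Lemma span_nil a b (X : 'M[C]_(a,b)) : in_span [::] X -> X = 0.
Proof. by case=> c ->; rewrite big_ord0. Qed.

Lemma span_cons a b z (L : seq 'M[C]_(a,b)) Z : in_span (z :: L) Z ->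
  exists c Z1, in_span L Z1 /\ Z = c *: z + Z1.
Proof.
case=> c ->; rewrite big_ord_recl /=; exists (c ord0).
eexists; split; last reflexivity.
by exists (fun i => c (lift ord0 i)).
Qed.

Lemma span_catl a b (L1 L2 : seq 'M[C]_(a,b)) X : in_span L1 X -> in_span (L1 ++ L2) X.
Proof. by apply: span_sub => Z HZ; apply: span_mem; rewrite mem_cat HZ. Qed.

Lemma span_catr a b (L1 L2 : seq 'M[C]_(a,b)) X : in_span L2 X -> in_span (L1 ++ L2) X.
Proof. by apply: span_sub => Z HZ; apply: span_mem; rewrite mem_cat HZ orbT. Qed.

Lemma span_consr a b z (L : seq 'M[C]_(a,b)) X : in_span L X -> in_span (z :: L) X.
Proof. by apply: span_sub => Z HZ; apply: span_mem; rewrite inE HZ orbT. Qed.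

Lemma proj_orthr a b (L : seq 'M[C]_(a,b)) X Y Z :
  is_proj L X Y -> in_span L Z -> minner Z (X - Y) = 0.
Proof. by case=> _ H HZ; rewrite minnerC H // rmorph0. Qed.

Lemma proj_exists a b (L : seq 'M[C]_(a,b)) X : exists Y, is_proj L X Y.
Proof.
elim: L X => [|z L IH] X.
  exists 0; split; first exact: span0.
  by move=> Z /span_nil ->; rewrite minner0r.
have [Y [HY1 HY2]] := IH X; have [W [HW1 HW2]] := IH z.
set w := z - W.
have [w0|wn0] := eqVneq (minner w w) 0.
  have zW : z = W by apply/eqP; rewrite -subr_eq0; apply/eqP; exact: minner_eq0.
  exists Y; split; first exact: span_consr.
  move=> Z /span_cons [c [Z1 [HZ1 ->]]]; apply: HY2.
  by apply: spanD => //; apply: spanZ; rewrite zW.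
pose c0 := minner (X - Y) w / minner w w.
exists (Y + c0 *: w).
have HV : forall V, in_span L V -> minner (X - (Y + c0 *: w)) V = 0.
  move=> V HV; rewrite opprD addrA minnerBl HY2 // minnerZl /w HW2 //.
  by rewrite mulr0 subr0.
split.
  apply: spanD; first exact: span_consr.
  apply: spanZ; apply: spanB; first by apply: span_mem; rewrite inE eqxx.
  exact: span_consr.
move=> Z /span_cons [c [Z1 [HZ1 ->]]].
rewrite minnerDr minnerZr (HV Z1 HZ1) addr0.
have -> : z = w + W by rewrite /w subrK.
rewrite minnerDr (HV W HW1) addr0 opprD addrA minnerBl minnerZl /c0 divfK //.
by rewrite subrr mulr0.
Qed.

Lemma proj_ipR a b (L : seq 'M[C]_(a,b)) X P Z :
  is_proj L X P -> in_span L Z -> ipR (X - P) Z = 0.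
Proof. by case=> _ H HZ; rewrite /ipR H. Qed.

Lemma pythag a b (L : seq 'M[C]_(a,b)) X P :
  is_proj L X P -> nsq X = nsq P + nsq (X - P).
Proof.
move=> H; have E : X = P + (X - P) by rewrite addrC subrK.
rewrite {1}E nsqD (ipRC P) (proj_ipR H); first by rewrite mulr0 addr0.
by case: H.
Qed.

Lemma proj_best a b (L : seq 'M[C]_(a,b)) X P Z :
  is_proj L X P -> in_span L Z -> nsq (X - P) <= nsq (X - Z).
Proof.
move=> H HZ; have E : X - Z = (X - P) + (P - Z) by rewrite addrA subrK.
rewrite E (nsqD (X - P)) (proj_ipR H); last by apply: spanB => //; case: H.
by rewrite mulr0 addr0 lerDl nsq_ge0.
Qed.

Lemma proj_trans a b (L1 L2 : seq 'M[C]_(a,b)) X Y G :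
  (forall Z, in_span L1 Z -> in_span L2 Z) ->
  is_proj L2 X Y -> is_proj L1 Y G -> is_proj L1 X G.
Proof.
move=> S [_ H2] [H3 H4]; split => // Z HZ.
have -> : X - G = (X - Y) + (Y - G) by rewrite addrA subrK.
by rewrite minnerDl H2 ?H4 ?addr0 //; apply: S.
Qed.

Lemma rank_sum a b n (F : 'I_n -> 'M[C]_(a,b)) :
  (forall i, \rank (F i) <= 1)%N -> (\rank (\sum_(i < n) F i)%R <= n)%N.
Proof.
elim: n F => [|n IH] F HF; first by rewrite big_ord0 mxrank0.
rewrite big_ord_recr /=; apply: leq_trans (mxrank_add _ _) _.
by rewrite -[X in (_ <= X)%N]addn1 leq_add ?IH.
Qed.

Lemma rank_span a b (L : seq 'M[C]_(a,b)) X :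
  (forall Z, Z \in L -> \rank Z <= 1)%N -> in_span L X -> (\rank X <= size L)%N.
Proof.
move=> H [c ->]; apply: rank_sum => i.
apply: (leq_trans (mxrank_scale (c i) L`_i)); apply: H; exact: mem_nth.
Qed.
Lemma mulmx_colrow a q b (B : 'M[C]_(a,q)) (D : 'M[C]_(q,b)) :
  B *m D = \sum_(k < q) col k B *m row k D.
Proof.
apply/matrixP => i j; rewrite !mxE summxE; apply: eq_bigr => k _.
by rewrite mxE big_ord1 !mxE.
Qed.

Lemma atoms_list a b (O : 'M[C]_(a,b) -> Prop) (HO : atom_set O)
  (s : seq 'M[C]_(a,b)) : (forall T, T \in s -> \rank T <= 1)%N ->
  exists L, [/\ uniq L, (forall Z, Z \in L -> O Z), (size L <= size s)%N &
              forall T, T \in s -> in_span L T].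
Proof.
elim: s => [|T s IH] Hs; first by exists [::]; split.
have [L [u hO sz sp]] : exists L, [/\ uniq L, (forall Z, Z \in L -> O Z),
    (size L <= size s)%N & forall T, T \in s -> in_span L T].
  by apply: IH => T' h; apply: Hs; rewrite inE h orbT.
have [T0|Tn0] := eqVneq T 0.
  exists L; split => //; first exact: leqW.
  move=> T'; rewrite inE => /orP [/eqP ->|]; last exact: sp.
  by rewrite T0; exact: span0.
have rT1 : \rank T = 1%N.
  apply/eqP; rewrite eqn_leq Hs ?mem_head // lt0n mxrank_eq0 //.
have [Z [[OZ [c Tc]] _]] := (HO.2 T rT1).
case: (boolP (Z \in L)) => ZL.
  exists L; split => //; first exact: leqW.
  move=> T'; rewrite inE => /orP [/eqP ->|]; last exact: sp.
  by rewrite Tc; apply: spanZ; apply: span_mem.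
exists (Z :: L); split => /=.
- by rewrite ZL u.
- by move=> Z'; rewrite inE => /orP [/eqP ->|]; last exact: hO.
- by rewrite ltnS.
- move=> T'; rewrite inE => /orP [/eqP ->|].
    by rewrite Tc; apply: spanZ; apply: span_mem; rewrite mem_head.
  by move=> h; apply: span_consr; apply: sp.
Qed.

Lemma exists_atoms a b (O : 'M[C]_(a,b) -> Prop) (HO : atom_set O) r X :
  (\rank X <= r)%N -> exists L, admissible O r L /\ in_span L X.
Proof.
move=> HX.
pose s := [seq col k (col_base X) *m row k (row_base X) | k <- enum 'I_(\rank X)].
have Hs : forall T, T \in s -> (\rank T <= 1)%N.
  move=> T /mapP [k _ ->].
  exact: leq_trans (mxrankM_maxl _ _) (rank_leq_col _).
have [L [u hO sz sp]] := atoms_list HO Hs.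
exists L; split.
  split => //; split => //.
  by apply: leq_trans sz _; rewrite size_map size_enum_ord.
rewrite -(mulmx_base X) mulmx_colrow.
apply: (big_ind (fun Y => in_span L Y)); first exact: span0.
  by move=> ? ?; apply: spanD.
by move=> k _; apply: sp; apply: map_f; rewrite mem_enum.
Qed.
Lemma minner_sumr a b (w : 'M[C]_(a,b)) n (F : 'I_n -> 'M[C]_(a,b)) :
  minner w (\sum_(i < n) F i) = \sum_(i < n) minner w (F i).
Proof. exact: (big_morph (minner w) (minnerDr w) (minner0r w)). Qed.

Lemma adjointP m n p (A : {linear 'M[C]_(m,n) -> 'cV[C]_p}) w X :
  minner (adjoint A w) X = minner w (A X).
Proof.
rewrite {2}(matrix_sum_delta X) linear_sum minner_sumr minnerE.
apply: eq_bigr => i _; rewrite linear_sum minner_sumr; apply: eq_bigr => j _.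
by rewrite linearZ minnerZr /adjoint mxE vinnerE mulrC.
Qed.

Lemma ReC_ge0 (d : C) : 0 <= d -> d = ((complex.Re d)%:C)%C.
Proof. by case: d => x y /ger0_Im /= ->. Qed.

Lemma rip_R m n p (A : {linear 'M[C]_(m,n) -> 'cV[C]_p}) s d :
  rip_ineq A s d -> 0 <= d -> forall X, (\rank X <= s)%N ->
  (1 - complex.Re d) * nsq X <= nsq (A X) /\ nsq (A X) <= (1 + complex.Re d) * nsq X.
Proof.
move=> H hd X HX; move: (H X HX); rewrite !vnormE !fnormE.
rewrite {1 2}(ReC_ge0 hd); set dd := complex.Re d.
rewrite -!rmorphXn /= -!nR_sq -!expr2.
have E1 : forall x : K, (1 - (dd%:C)%C) * (x%:C)%C = (((1 - dd) * x)%:C)%C.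
  by move=> x; rewrite rmorphM rmorphB rmorph1.
have E2 : forall x : K, (1 + (dd%:C)%C) * (x%:C)%C = (((1 + dd) * x)%:C)%C.
  by move=> x; rewrite rmorphM rmorphD rmorph1.
by rewrite E1 E2 !lecR => /andP [].
Qed.

Lemma rip_cross m n p (A : {linear 'M[C]_(m,n) -> 'cV[C]_p}) (dd : K)
  (L : seq 'M[C]_(m,n)) X V :
  (forall Y, in_span L Y ->
     (1 - dd) * nsq Y <= nsq (A Y) /\ nsq (A Y) <= (1 + dd) * nsq Y) ->
  0 <= dd -> in_span L X -> in_span L V ->
  ipR (A X) (A V) - ipR X V <= dd * nR X * nR V.
Proof.
move=> H hd hX hV.
set al := nR X; set be := nR V.
have ha : 0 <= al := nR_ge0 X; have hb : 0 <= be := nR_ge0 V.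
have sa : al * al = nsq X := nR_sq X; have sb : be * be = nsq V := nR_sq V.
have [a0|an0] := eqVneq al 0.
  have X0 : X = 0 by apply: nsq_eq0; rewrite -sa a0 mulr0.
  by rewrite X0 linear0 !ipR0l subr0 a0 mulr0 mul0r.
have [b0|bn0] := eqVneq be 0.
  have V0 : V = 0 by apply: nsq_eq0; rewrite -sb b0 mulr0.
  by rewrite V0 linear0 !ipR0r subr0 b0 mulr0.
have ap : 0 < al by rewrite lt_def an0 ha.
have bp : 0 < be by rewrite lt_def bn0 hb.
pose Y1 := ((be%:C)%C *: X + (al%:C)%C *: V).
pose Y2 := ((be%:C)%C *: X + ((- al)%:C)%C *: V).
have hY1 : in_span L Y1 by apply: spanD; apply: spanZ.
have hY2 : in_span L Y2 by apply: spanD; apply: spanZ.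
have [_ H1] := H _ hY1; have [H2 _] := H _ hY2.
move: H1 H2; rewrite /Y1 /Y2 !linearD !linearZ /= !nsqLC -sa -sb => H1 H2.
set u := ipR (A X) (A V) in H1 H2 *; set w := ipR X V in H1 H2 *.
have key : 4 * (al * be) * (u - w) <= 4 * (al * be) * (dd * al * be) by nra.
have abp : 0 < 4 * (al * be) by rewrite mulr_gt0 // mulr_gt0.
by rewrite -(ler_pM2l abp).
Qed.

Lemma nR_A_le (x y dd : K) : 0 <= y -> 0 <= x -> dd <= 1 / 25%:R ->
  x * x <= (1 + dd) * (y * y) -> x <= 51%:R / 50%:R * y.
Proof. move=> *; nra. Qed.
Lemma nsqZ a b (t : K) (X : 'M[C]_(a,b)) : nsq ((t%:C)%C *: X) = t * t * nsq X.
Proof. by rewrite /nsq ipRZl ipRZr mulrA. Qed.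

Lemma nR_le_nsq a b (X Y : 'M[C]_(a,b)) : nR X <= nR Y -> nsq X <= nsq Y.
Proof. move=> h; rewrite -(nR_sq X) -(nR_sq Y); apply: ler_pM => //; exact: nR_ge0. Qed.

Lemma quad0 (c q : K) : 0 <= q -> (forall t, 0 <= - (2 * t * c) + t * t * q) -> c = 0.
Proof.
move=> hq H.
have hq1 : q + 1 != 0 by rewrite gt_eqF //; lra.
have hs : 0 < (q + 1)^-1 by rewrite invr_gt0; lra.
set s := (q + 1)^-1 in hs hq1 *.
have sq : s * q = 1 - s.
  have : s * (q + 1) = 1 by rewrite /s mulVf.
  lra.
have := H (c * s).
have -> : - (2 * (c * s) * c) + c * s * (c * s) * q = - (c * c * s * (1 + s)).
  have -> : c * s * (c * s) * q = c * c * s * (s * q) by ring.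
  rewrite sq; ring.
move=> h; have h2 : c * c * s * (1 + s) <= 0 by lra.
have h3 : c * c <= 0.
  have h4 : 0 < s * (1 + s) by apply: mulr_gt0 => //; lra.
  by rewrite -(ler_pM2r h4) mul0r mulrA.
nra.
Qed.

Lemma final_arith (dd rr v ee q E x f : K) :
  0 <= dd -> dd <= 1 / 25%:R -> 0 <= rr -> 0 <= v -> 0 <= ee -> 0 <= q -> 0 <= E ->
  0 <= x -> 0 <= f ->
  ee <= dd * rr + 51%:R / 50%:R * v -> q <= 2 * ee ->
  (1 - dd) * E <= dd * q + 51%:R / 50%:R * v -> x <= q + E -> f <= 2 * x ->
  f <= 1 / 2%:R * rr + 13%:R / 2%:R * v.
Proof.
move=> h0 hd1 hr hv he hq hE hx hf H1 H2 H3 H4 H5.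
have h1' : (1 - dd) * x <= (1 - dd) * (q + E) by apply: ler_wpM2l => //; lra.
have h1 : (1 - dd) * x <= 2 * dd * rr + 3 * (51%:R / 50%:R) * v.
  have : dd * q <= dd * (2 * (dd * rr + 51%:R / 50%:R * v)) by apply: ler_wpM2l => //; lra.
  have : dd * (dd * rr) <= 1/25%:R * (dd * rr) by apply: ler_wpM2r => //; apply: mulr_ge0.
  nra.
have h2 : (1 - dd) * f <= 2 * ((1 - dd) * x).
  by rewrite mulrCA; apply: ler_wpM2l => //; lra.
have hpos : 0 < 1 - dd by lra.
rewrite -(ler_pM2l hpos).
have : dd * rr <= 1/25%:R * rr by apply: ler_wpM2r.
have : dd * v <= 1/25%:R * v by apply: ler_wpM2r.
nra.
Qed.

Lemma div_le (x y : K) : 0 <= x -> 0 <= y -> x * x <= x * y -> x <= y.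
Proof. move=> *; nra. Qed.

Lemma div_le2 (x y dd : K) : 0 <= x -> 0 <= y -> dd < 1 -> (1 - dd) * (x * x) <= x * y ->
  (1 - dd) * x <= y.
Proof. move=> *; nra. Qed.

Lemma convC (f rr v : K) : f <= 1 / 2%:R * rr + 13%:R / 2%:R * v ->
  ((f%:C)%C : C) <= 1 / 2%:R * (rr%:C)%C + 13%:R / 2%:R * (v%:C)%C.
Proof.
have E1 : (1 / 2%:R : C) = (((1 / 2%:R : K))%:C)%C.
  by rewrite rmorphM rmorph1 fmorphV rmorph_nat.
have E2 : (13%:R / 2%:R : C) = (((13%:R / 2%:R : K))%:C)%C.
  by rewrite rmorphM fmorphV !rmorph_nat.
by rewrite E1 E2 -!rmorphM -rmorphD lecR.
Qed.

Lemma convC2 (f a v : K) k : f <= (1 / 2%:R) ^+ k * a + 13%:R * v ->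
  ((f%:C)%C : C) <= (1 / 2%:R) ^+ k * (a%:C)%C + 13%:R * (v%:C)%C.
Proof.
have E1 : (1 / 2%:R : C) = (((1 / 2%:R : K))%:C)%C.
  by rewrite rmorphM rmorph1 fmorphV rmorph_nat.
have E2 : (13%:R : C) = (((13%:R : K))%:C)%C by rewrite rmorph_nat.
by rewrite E1 E2 -rmorphXn -!rmorphM -rmorphD lecR.
Qed.

Lemma d_le (d : C) : 0 <= d -> d <= 1 / 25%:R -> complex.Re d <= 1 / 25%:R.
Proof.
move=> h0; rewrite {1}(ReC_ge0 h0).
have -> : (1 / 25%:R : C) = (((1 / 25%:R : K))%:C)%C.
  by rewrite rmorphM rmorph1 fmorphV rmorph_nat.
by rewrite lecR.
Qed.

Lemma normal_eq m n p (A : {linear 'M[C]_(m,n) -> 'cV[C]_p}) (b : 'cV[C]_p)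
  (L : seq 'M[C]_(m,n)) Xt Z :
  in_span L Xt -> (forall X, in_span L X -> vnorm (b - A Xt) <= vnorm (b - A X)) ->
  in_span L Z -> ipR (b - A Xt) (A Z) = 0.
Proof.
move=> hXt H hZ; apply: (quad0 (q := nsq (A Z))); first exact: nsq_ge0.
move=> t; have := H (Xt + (t%:C)%C *: Z) (spanD hXt (spanZ _ hZ)).
rewrite !vnormE !fnormE lecR linearD linearZ /= opprD addrA.
set r0 := b - A Xt => h.
have h2 : nsq r0 <= nsq (r0 - (t%:C)%C *: A Z) by apply: nR_le_nsq.
move: h2; rewrite (nsqB r0) nsqZ ipRZr; lra.
Qed.
Lemma c51_ge0 : 0 <= 51%:R / 50%:R :> K. Proof. lra. Qed.
Lemma ar_lt1 (dd : K) : dd <= 1 / 25%:R -> dd < 1. Proof. lra. Qed.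
Lemma ar1 (Ye Ype Re u z dd rr v nae ne s : K) : Ye - Ype = 0 -> Ye = u + z ->
  u - Re <= dd * rr * ne -> z <= v * nae -> v * nae <= v * (s * ne) ->
  Ype - Re <= ne * (dd * rr + s * v).
Proof. move=> *; lra. Qed.
Lemma ar2 (y g1 g2 d1 d2 d3 : K) : y = g1 + d1 -> y = g2 + d2 -> d2 <= d3 -> g2 <= g1 -> d1 <= d3.
Proof. move=> *; lra. Qed.
Lemma ar3 (a b c d e : K) : a <= b -> b <= c + d -> c = e -> d <= e -> a <= 2 * e.
Proof. move=> *; lra. Qed.
Lemma ar4 (q11 aa nz qe dd nq ne v nae s sqE : K) : q11 - aa + nz = 0 ->
  q11 - qe <= dd * nq * ne -> qe = 0 -> nz <= v * nae -> v * nae <= v * (s * ne) ->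
  (1 - dd) * sqE <= aa -> (1 - dd) * sqE <= ne * (dd * nq + s * v).
Proof. move=> *; lra. Qed.
Lemma ar5 (f x y : K) : f <= x + y -> y <= x -> f <= 2 * x.
Proof. move=> *; lra. Qed.
Lemma ar6 (a v : K) : 0 <= v -> a <= 1 * a + 13%:R * v.
Proof. move=> *; lra. Qed.
Lemma ar7 (s a v t : K) : s <= 1 / 2%:R * t + 13%:R / 2%:R * v -> t <= a + 13%:R * v ->
  s <= 1 / 2%:R * a + 13%:R * v.
Proof. move=> *; lra. Qed.
Theorem theorem3 (m n p r : nat) (Hm : (0 < m)%N) (Hn : (0 < n)%N)
  (Hp : (0 < p)%N) (Hr : (0 < r)%N)
  (O : 'M[C]_(m, n) -> Prop) (HO : atom_set O)
  (A : {linear 'M[C]_(m, n) -> 'cV[C]_p})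
  (HA : exists d : C, is_rip_const A (4 * r) d /\ d <= 1 / 25%:R)
  (X0 : 'M[C]_(m, n)) (HX0 : (\rank X0 <= r)%N)
  (nu : 'cV[C]_p) (b : 'cV[C]_p) (Hb : b = A X0 + nu)
  (Xhat : nat -> 'M[C]_(m, n)) (Hrun : admira_run O A b r Xhat) :
  (forall k : nat,
     fnorm (X0 - Xhat k.+1)
       <= 1 / 2%:R * fnorm (X0 - Xhat k) + 13%:R / 2%:R * vnorm nu) /\
  (forall k : nat,
     fnorm (X0 - Xhat k)
       <= (1 / 2%:R) ^+ k * fnorm X0 + 13%:R * vnorm nu).
Proof.
case: HA => d [[hd0 [hrip _]] hd25].
have hdd : complex.Re d <= 1 / 25%:R := d_le hd0 hd25.
have hdd0 : 0 <= complex.Re d by have := hd0; rewrite {1}(ReC_ge0 hd0) ler0c.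
set dd := complex.Re d in hdd hdd0.
have HR : forall L Y, (forall Z, Z \in L -> O Z) -> (size L <= 4 * r)%N -> in_span L Y ->
    (1 - dd) * nsq Y <= nsq (A Y) /\ nsq (A Y) <= (1 + dd) * nsq Y.
  move=> L Y hL hs hY; apply: (rip_R hrip hd0).
  apply: leq_trans hs; apply: rank_span hY => Z hZ.
  by have [_ ->] := proj1 HO Z (hL Z hZ).
have HAle : forall L Y, (forall Z, Z \in L -> O Z) -> (size L <= 4 * r)%N -> in_span L Y ->
    nR (A Y) <= 51%:R / 50%:R * nR Y.
  move=> L Y hL hs hY; have [_ h] := HR L Y hL hs hY.
  apply: (nR_A_le (dd := dd)) => //; rewrite ?nR_ge0 // !nR_sq //.
case: Hrun => Psihat [Psi1 [Xtil [HX0' [HP0 Hk]]]].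
have Hinv : forall k, admissible O r (Psihat k) /\ in_span (Psihat k) (Xhat k).
  case=> [|k]; first by rewrite HP0 HX0'; split; [split => //| exact: span0].
  by have [_ [_ [[hadm _] [hs _]]]] := Hk k.
have [L0 [hL0 hX0L]] := exists_atoms HO HX0.
have step : forall k, nR (X0 - Xhat k.+1) <=
    1 / 2%:R * nR (X0 - Xhat k) + 13%:R / 2%:R * nR nu.
  move=> k.
  have [[admO hmax1] [[hXt1 hXt2] [[admH hmax4] hproj5]]] := Hk k.
  have [[uP [atP szP]] spanK] := Hinv k.
  have [uL0 [atL0 szL0]] := hL0.
  have [uO [atO szO]] := admO.
  pose T := undup (L0 ++ Psihat k).
  have atT : forall Z, Z \in T -> O Z.
    by move=> Z; rewrite mem_undup mem_cat => /orP [] ?; [apply: atL0|apply: atP].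
  have szT : (size T <= 2 * r)%N.
    apply: leq_trans (size_undup _) _; rewrite size_cat mul2n -addnn leq_add //.
  have admT : admissible O (2 * r) T by split; [exact: undup_uniq | split].
  have subT : forall Z, in_span (L0 ++ Psihat k) Z -> in_span T Z.
    by move=> Z; apply: span_sub => Z' hZ'; apply: span_mem; rewrite mem_undup.
  pose R := X0 - Xhat k.
  have hRT : in_span T R by apply: subT; apply: spanB; [apply: span_catl | apply: span_catr].
  pose W := Psi1 k ++ T.
  have atW : forall Z, Z \in W -> O Z.
    by move=> Z; rewrite mem_cat => /orP [] ?; [apply: atO| apply: atT].
  have szW : (size W <= 4 * r)%N.
    by rewrite size_cat (_ : 4 = 2 + 2)%N // mulnDl leq_add.
  have HRW := fun Y hY => HR W Y atW szW hY.
  have hw : b - A (Xhat k) = A R + nu by rewrite Hb /R linearB /= addrAC.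
  pose Y := adjoint A (b - A (Xhat k)).
  have [Y' hY'] := proj_exists W Y.
  pose e := Y' - R.
  have he : in_span W e by apply: spanB; [case: hY' | apply: span_catr].
  have hAe := HAle W e atW szW he.
  have ebound : nR e <= dd * nR R + 51%:R / 50%:R * nR nu.
    have h1 : ipR (Y - Y') e = 0 := proj_ipR hY' he.
    have h2 : ipR Y e = ipR (A R) (A e) + ipR nu (A e).
      by rewrite /ipR /Y adjointP hw -/(ipR _ _) ipRDl.
    have E0 : nsq e = ipR Y' e - ipR R e by rewrite -ipRBl.
    rewrite ipRBl in h1.
    have c1 : ipR (A R) (A e) - ipR R e <= dd * nR R * nR e.
      by apply: rip_cross HRW hdd0 _ he; apply: span_catr.
    have c2 := CS nu (A e).
    have c3 : nR nu * nR (A e) <= nR nu * (51%:R / 50%:R * nR e).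
      by apply: ler_wpM2l => //; exact: nR_ge0.
    have g1 := nR_ge0 R; have g2 := nR_ge0 nu; have g3 := nR_ge0 e.
    apply: (@div_le (nR e) (dd * nR R + 51%:R / 50%:R * nR nu) g3); first exact: addr_ge0 (mulr_ge0 hdd0 g1) (mulr_ge0 c51_ge0 g2).
    rewrite nR_sq E0; exact: ar1 h1 h2 c1 c2 c3.
  have [G1 hG1] := proj_exists (Psi1 k) Y'.
  have [G2 hG2] := proj_exists T Y'.
  have hG1' : is_proj (Psi1 k) Y G1.
    by apply: (proj_trans _ hY' hG1) => Z; apply: span_catl.
  have hG2' : is_proj T Y G2.
    by apply: (proj_trans _ hY' hG2) => Z; apply: span_catr.
  have hmx : nR G2 <= nR G1.
    by have := hmax1 T admT G1 G2 hG1' hG2'; rewrite !fnormE lecR.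
  have p1 := pythag hG1; have p2 := pythag hG2.
  have b2 : nsq (Y' - G2) <= nsq (Y' - R) := proj_best hG2 hRT.
  have n12 : nsq G2 <= nsq G1 := nR_le_nsq hmx.
  have d1 : nR (Y' - G1) <= nR e by apply: nsq_le; exact: ar2 p1 p2 b2 n12.
  pose Pt := Psi1 k ++ Psihat k.
  have [H hH] := proj_exists Pt X0.
  pose Q := X0 - H.
  have hZ : in_span Pt (Xhat k + G1).
    by apply: spanD; [apply: span_catr | apply: span_catl; case: hG1].
  have q1 : nR Q <= nR (R - G1).
    apply: nsq_le; have := proj_best hH hZ.
    by rewrite /R opprD addrA.
  have q2 : nR Q <= 2 * nR e.
    have h := nR_triB R Y' G1; rewrite (nR_sym R Y') in h.
    exact: ar3 q1 h (erefl _) d1.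
  pose Xt := Xtil k; pose E := Xt - H.
  have hE : in_span Pt E by apply: spanB => //; case: hH.
  have ne := normal_eq hXt1 hXt2 hE.
  have bw : b - A (Xtil k) = A Q - A E + nu.
    rewrite -linearB (_ : Q - E = X0 - Xt); last first.
      by rewrite /Q /E opprB addrA subrK.
    by rewrite Hb linearB /= addrAC.
  rewrite bw ipRDl ipRBl in ne.
  pose L3 := Pt ++ L0.
  have atL3 : forall Z, Z \in L3 -> O Z.
    by move=> Z; rewrite !mem_cat => /orP [/orP [] |] ?; [apply: atO|apply: atP|apply: atL0].
  have szL3 : (size L3 <= 4 * r)%N.
    rewrite !size_cat (_ : 4 = 2 + 1 + 1)%N // !mulnDl mul1n.
    by rewrite leq_add // leq_add.
  have hQ3 : in_span L3 Q.
    by apply: spanB; [apply: span_catr | apply: span_catl; case: hH].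
  have hE3 : in_span L3 E by apply: span_catl.
  have c3 := rip_cross (fun Y hY => HR L3 Y atL3 szL3 hY) hdd0 hQ3 hE3.
  have oQE : ipR Q E = 0 := proj_ipR hH hE.
  have c4 := CS nu (A E).
  have hAE := HAle L3 E atL3 szL3 hE3.
  have [hl _] := HR L3 E atL3 szL3 hE3.
  have c5 : nR nu * nR (A E) <= nR nu * (51%:R / 50%:R * nR E).
    by apply: ler_wpM2l => //; exact: nR_ge0.
  have g1 := nR_ge0 Q; have g2 := nR_ge0 nu; have g3 := nR_ge0 E.
  have Ebound : (1 - dd) * nR E <= dd * nR Q + 51%:R / 50%:R * nR nu.
    apply: (@div_le2 (nR E) (dd * nR Q + 51%:R / 50%:R * nR nu) dd g3); first exact: addr_ge0 (mulr_ge0 hdd0 g1) (mulr_ge0 c51_ge0 g2).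
      exact: ar_lt1.
    rewrite nR_sq; exact: ar4 ne c3 oQE c4 c5 hl.
  have x1 : nR (X0 - Xt) <= nR Q + nR E.
    have -> : X0 - Xt = Q + - E by rewrite /Q /E opprB addrA subrK.
    by rewrite -(nRN E); apply: nR_tri.
  have [P0 hP0] := proj_exists L0 Xt.
  have hmx4 : nR P0 <= nR (Xhat k.+1).
    by have := hmax4 L0 hL0 _ _ hproj5 hP0; rewrite !fnormE lecR.
  have p3 := pythag hproj5; have p4 := pythag hP0.
  have b4 : nsq (Xt - P0) <= nsq (Xt - X0) := proj_best hP0 hX0L.
  have n4 := nR_le_nsq hmx4.
  have d4 : nR (Xt - Xhat k.+1) <= nR (X0 - Xt).
    by rewrite (nR_sym X0); apply: nsq_le; exact: ar2 p3 p4 b4 n4.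
  have f1 := nR_triB X0 Xt (Xhat k.+1).
  exact: (final_arith hdd0 hdd (nR_ge0 R) (nR_ge0 nu) (nR_ge0 e) (nR_ge0 Q) (nR_ge0 E)
    (nR_ge0 _) (nR_ge0 _) ebound q2 Ebound x1 (ar5 f1 d4)).
split.
  by move=> k; rewrite !fnormE vnormE fnormE; apply: convC; exact: step k.
move=> k; rewrite !fnormE vnormE fnormE; apply: convC2.
elim: k => [|k IH].
  by rewrite HX0' subr0 expr0; apply: ar6; exact: nR_ge0.
rewrite exprS -mulrA; exact: ar7 (step k) IH.
Qed.
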